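(* Let $h>0$, $P>0$, $0<\zeta\le1$, $\sigma_A^2>0$, $\sigma_{\rm cov}^2>0$, $P_S>0$, and $Q\in[0,\zeta hP)$. Define $$a=\sigma_{\rm cov}^2-\frac{\sigma_A^2P_S}{\zeta hP},\quad b=\sigma_A^2\Big(1-\frac{Q}{\zeta hP}\Big),\quad c=-\frac{P_S}{\zeta},\quad d=hP\Big(1-\frac{Q}{\zeta hP}\Big),$$ and $$R(s)=s\log_2\!\Big(1+\frac{cs+d}{as+b}\Big).$$ Then $R$ is (well defined and) concave on the interval $s\in\Big[\frac{d}{hP-c},\ \min\{-\frac dc,1\}\Big]$.
   Context: $R(s)$ is the rate achieved on the boundary of the OPS rate-energy region of a separated receiver with circuit power $P_S$ when the harvested net energy equals $Q$, as a function of $s=1-\alpha$, the fraction of time the information decoder is on; $\sigma_A^2$ is antenna noise power, $\sigma_{\rm cov}^2$ conversion noise power, $\zeta$ harvesting efficiency, $hP$ the received power. *)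

(* Defs.v *)
From Stdlib Require Import Reals Lra.
Open Scope R_scope.

Definition log2 (x : R) : R := ln x / ln 2.

Definition coef_a (h P zeta sA2 scov2 PS : R) : R := scov2 - sA2 * PS / (zeta * h * P).
Definition coef_b (h P zeta sA2 Q : R) : R := sA2 * (1 - Q / (zeta * h * P)).
Definition coef_c (zeta PS : R) : R := - PS / zeta.
Definition coef_d (h P zeta Q : R) : R := h * P * (1 - Q / (zeta * h * P)).

Definition rate (a b c d s : R) : R := s * log2 (1 + (c * s + d) / (a * s + b)).

Definition concave_on (f : R -> R) (lo hi : R) : Prop :=
  forall x y t, lo <= x <= hi -> lo <= y <= hi -> 0 <= t <= 1 ->
    t * f x + (1 - t) * f y <= f (t * x + (1 - t) * y).

(* Main.v *)
Require Import Defs.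
From Stdlib Require Import Reals Lra Psatz.
From Coquelicot Require Import Coquelicot.
Open Scope R_scope.

Lemma conv_in lo hi x y t : lo <= x <= hi -> lo <= y <= hi -> 0 <= t <= 1 ->
  lo <= t * x + (1 - t) * y <= hi.
Proof. intros; split; nra. Qed.

Lemma concave_from_deriv (F F1 F2 : R -> R) lo hi :
 (forall s, lo<=s<=hi -> derivable_pt_lim F s (F1 s)) ->
 (forall s, lo<=s<=hi -> derivable_pt_lim F1 s (F2 s)) ->
 (forall s, lo<=s<=hi -> F2 s <= 0) -> concave_on F lo hi.
Proof.
  intros HF HF1 HF2.
  assert (dec : forall x y, lo <= x -> x < y -> y <= hi -> F1 y <= F1 x).
  { intros x y Hx Hxy Hy.
    destruct (MVT_cor2 F1 F2 x y Hxy) as [c [Hc1 Hc2]].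
    { intros; apply HF1; lra. }
    assert (F2 c <= 0) by (apply HF2; lra). nra. }
  assert (tan : forall x y, lo <= x <= hi -> lo <= y <= hi ->
            F y <= F x + F1 x * (y - x)).
  { intros x y Hx Hy. destruct (total_order_T x y) as [[H|H]|H].
    - destruct (MVT_cor2 F F1 x y H) as [c [Hc1 Hc2]].
      { intros; apply HF; lra. }
      assert (F1 c <= F1 x) by (apply dec; lra). nra.
    - subst; lra.
    - destruct (MVT_cor2 F F1 y x H) as [c [Hc1 Hc2]].
      { intros; apply HF; lra. }
      assert (F1 x <= F1 c) by (apply dec; lra). nra. }
  intros x y t Hx Hy Ht.
  pose proof (conv_in lo hi x y t Hx Hy Ht) as Hz.
  set (z := t * x + (1 - t) * y) in *.
  pose proof (tan z x Hz Hx). pose proof (tan z y Hz Hy).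
  assert (t * F x <= t * (F z + F1 z * (x - z))) by (apply Rmult_le_compat_l; lra).
  assert ((1-t) * F y <= (1-t) * (F z + F1 z * (y - z))) by (apply Rmult_le_compat_l; lra).
  assert (E : t * (F z + F1 z * (x - z)) + (1-t) * (F z + F1 z * (y - z)) = F z)
    by (unfold z; ring).
  lra.
Qed.

Lemma concave_gen (a b al be lo hi : R) :
  (forall s, lo <= s <= hi -> 0 < s /\ 0 < a * s + b /\ 0 < al * s + be) ->
  0 < b -> b * al <= be * a ->
  concave_on (fun s => s * (ln (al * s + be) - ln (a * s + b))) lo hi.
Proof.
  intros Hdom Hb Hcond.
  apply concave_from_deriv with
    (F1 := fun s => ln (al * s + be) - ln (a * s + b)
                    + s * (al / (al * s + be) - a / (a * s + b)))
    (F2 := fun s => 2 * (al / (al * s + be) - a / (a * s + b))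
                    + s * (- (al * al) / ((al * s + be) * (al * s + be))
                           + a * a / ((a * s + b) * (a * s + b)))).
  - intros s Hs; destruct (Hdom s Hs) as [H1 [H2 H3]].
    apply is_derive_Reals. auto_derive.
    + repeat split; lra.
    + field; lra.
  - intros s Hs; destruct (Hdom s Hs) as [H1 [H2 H3]].
    apply is_derive_Reals. auto_derive.
    + repeat split; lra.
    + field; lra.
  - intros s Hs; destruct (Hdom s Hs) as [H1 [H2 H3]].
    set (u := al * s + be) in *. set (v := a * s + b) in *.
    assert (E : 2 * (al / u - a / v) + s * (- (al * al) / (u * u) + a * a / (v * v))
              = (b*b*(u*u) - be*be*(v*v)) / (s * (u*u) * (v*v))).
    { unfold u, v in *; field; repeat split; lra. }
    rewrite E.
    assert (Hbu : b * u <= be * v) by (unfold u, v; nra).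
    assert (b * u > 0) by nra.
    assert (N : b*b*(u*u) - be*be*(v*v) <= 0) by nra.
    assert (D : 0 < / (s * (u*u) * (v*v))).
    { apply Rinv_0_lt_compat. apply Rmult_lt_0_compat; [apply Rmult_lt_0_compat|]; [lra|apply Rmult_lt_0_compat; lra|apply Rmult_lt_0_compat; lra]. }
    unfold Rdiv. nra.
Qed.

Theorem lemma1 (h P zeta sA2 scov2 PS Q : R)
  (hh : 0 < h) (hP : 0 < P) (hz : 0 < zeta <= 1) (hA : 0 < sA2)
  (hcov : 0 < scov2) (hPS : 0 < PS) (hQ : 0 <= Q < zeta * h * P) :
  let a := coef_a h P zeta sA2 scov2 PS in
  let b := coef_b h P zeta sA2 Q in
  let c := coef_c zeta PS in
  let d := coef_d h P zeta Q in
  let lo := d / (h * P - c) in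
  let hi := Rmin (- d / c) 1 in
  (* well-definedness: denominator nonzero and log argument positive *)
  (forall s, lo <= s <= hi ->
     a * s + b <> 0 /\ 0 < 1 + (c * s + d) / (a * s + b)) /\
  concave_on (rate a b c d) lo hi.
Proof.
  intros a b c d lo hi.
  set (hp := h * P). set (q := Q / (zeta * h * P)). set (m := PS / zeta / hp).
  assert (Hhp : 0 < hp) by (unfold hp; nra).
  assert (HK : 0 < zeta * h * P) by nra.
  assert (Hq : 0 <= q < 1).
  { unfold q; split.
    - apply Rdiv_le_0_compat; lra.
    - apply Rmult_lt_reg_r with (zeta * h * P); auto.
      unfold Rdiv; rewrite Rmult_assoc, Rinv_l; lra. }
  assert (Hm : 0 < m) by (unfold m; apply Rdiv_lt_0_compat; [apply Rdiv_lt_0_compat|]; lra).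
  assert (Ea : a = scov2 - sA2 * m).
  { unfold a, coef_a, m, hp; field; lra. }
  assert (Eb : b = sA2 * (1 - q)) by reflexivity.
  assert (Ec : c = - (m * hp)).
  { unfold c, coef_c, m; field; lra. }
  assert (Ed : d = hp * (1 - q)) by reflexivity.
  assert (Hdom : forall s, lo <= s <= hi ->
     0 < s /\ 0 < a * s + b /\ 0 <= c * s + d).
  { intros s [Hs1 Hs2].
    assert (Hlo : 0 < lo).
    { unfold lo. apply Rdiv_lt_0_compat; rewrite ?Ed, ?Ec; nra. }
    assert (Hs3 : s <= - d / c) by (eapply Rle_trans; [exact Hs2| apply Rmin_l]).
    rewrite Ec, Ed in Hs3.
    replace (- (hp * (1 - q)) / - (m * hp)) with ((1 - q) / m) in Hs3
      by (field; lra).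
    assert (Hsm : s * m <= 1 - q).
    { apply Rmult_le_compat_r with (r := m) in Hs3; [|lra].
      unfold Rdiv in Hs3; rewrite Rmult_assoc, Rinv_l in Hs3; lra. }
    rewrite Ea, Eb, Ec, Ed. repeat split; nra. }
  split.
  - intros s Hs. destruct (Hdom s Hs) as [H1 [H2 H3]]. split; [lra|].
    assert (0 <= (c * s + d) / (a * s + b)) by (apply Rdiv_le_0_compat; lra). lra.
  - assert (Hb : 0 < b) by (rewrite Eb; nra).
    assert (Hcond : b * (a + c) <= (b + d) * a).
    { assert (0 <= hp * (1 - q) * scov2) by (apply Rmult_le_pos; [apply Rmult_le_pos|]; lra). rewrite Ea, Eb, Ec, Ed. nra. }
    pose proof (concave_gen a b (a + c) (b + d) lo hi) as G.
    assert (Hln2 : 0 < ln 2) by (rewrite <- ln_1; apply ln_increasing; lra).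
    assert (Heq : forall s, lo <= s <= hi ->
      rate a b c d s = s * (ln ((a + c) * s + (b + d)) - ln (a * s + b)) * / ln 2).
    { intros s Hs. destruct (Hdom s Hs) as [H1 [H2 H3]].
      unfold rate, log2. rewrite <- ln_div by nra.
      replace (1 + (c * s + d) / (a * s + b)) with (((a + c) * s + (b + d)) / (a * s + b))
        by (field; lra).
      unfold Rdiv; ring. }
    assert (GC : concave_on (fun s => s * (ln ((a + c) * s + (b + d)) - ln (a * s + b))) lo hi).
    { apply G; auto. intros s Hs. destruct (Hdom s Hs) as [H1 [H2 H3]].
      repeat split; nra. }
    intros x y t Hx Hy Ht.
    pose proof (conv_in lo hi x y t Hx Hy Ht) as Hz.
    rewrite (Heq x Hx), (Heq y Hy), (Heq _ Hz).
    pose proof (GC x y t Hx Hy Ht) as GG. simpl in GG.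
    assert (Hi : 0 < / ln 2) by (apply Rinv_0_lt_compat; lra).
    nra.
Qed.
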